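(* Let $\mathbb{K}$ be an $\aleph_0$-complete field and $x=(x_1,\ldots,x_n)$. Let $F$ be a finite system of polynomial equations, with coefficients in $\mathbb{K}[\![x]\!]$, in unknowns $z_1,\ldots,z_q$ and some of their partial derivatives $\partial^{|j_1|}z_{i_1}/\partial x^{j_1},\ldots,\partial^{|j_s|}z_{i_s}/\partial x^{j_s}$, where $i_1,\ldots,i_s\in\{1,\ldots,q\}$ and $j_1,\ldots,j_s\in\mathbb{N}^n$. If $F=0$ has approximate solutions up to any order, i.e. for every $c\in\mathbb{N}$ there exists $z\in\mathbb{K}[\![x]\!]^q$ such that $F$ evaluated at $z$ and its corresponding partial derivatives lies in $(x)^c$, then $F=0$ has a solution $z\in\mathbb{K}[\![x]\!]^q$.
   Context: A field $\mathbb{K}$ is called $\aleph_0$-complete if every countable system $\mathcal S$ of polynomial equations with coefficients in $\mathbb{K}$ (in a countable number of indeterminates) has a solution in $\mathbb{K}$ if and only if every finite sub-system of $\mathcal S$ has a solution in $\mathbb{K}$. $(x)$ is the maximal ideal of $\mathbb{K}[\![x]\!]$; for $j=(j^1,\ldots,j^n)\in\mathbb{N}^n$, $|j|=j^1+\cdots+j^n$ and $\partial^{|j|}/\partial x^j$ denotes the formal partial derivative $\partial^{|j|}/\partial x_1^{j^1}\cdots\partial x_n^{j^n}$. *)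

(* Defs.v *)
From mathcomp Require Import all_boot all_algebra.
Set Implicit Arguments. Unset Strict Implicit. Unset Printing Implicit Defensive.
Import GRing.Theory.
Local Open Scope ring_scope.

(* A polynomial with coefficients in K in countably many indeterminates
   X_0, X_1, ... : a finite list of terms c * X_{v1} * ... * X_{vr}. *)
Definition cpoly (K : fieldType) := seq (K * seq nat).

Definition ceval (K : fieldType) (v : nat -> K) (p : cpoly K) : K :=
  \sum_(t <- p) t.1 * \prod_(k <- t.2) v k.

Definition aleph0_complete (K : fieldType) : Prop :=
  forall S : nat -> cpoly K,
    (exists v : nat -> K, forall k, ceval v (S k) = 0) <->
    (forall s : seq nat, exists v : nat -> K, forall k, k \in s -> ceval v (S k) = 0).

Definition mexp (n : nat) := {ffun 'I_n -> nat}.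
Definition PS (K : fieldType) (n : nat) := mexp n -> K.

Definition mdeg n (e : mexp n) : nat := (\sum_(i < n) e i)%N.

Section PSops.
Variables (K : fieldType) (n : nat).

Definition ps0 : PS K n := fun _ => 0.
Definition ps1 : PS K n := fun e => if mdeg e == 0%N then 1 else 0.
Definition ps_add (f g : PS K n) : PS K n := fun e => f e + g e.
(* Cauchy product: (fg)_m = sum_{a <= m} f_a g_{m-a}. *)
Definition ps_mul (f g : PS K n) : PS K n := fun m =>
  \sum_(a : {ffun 'I_n -> 'I_((\max_(i < n) m i).+1)} | [forall i, (a i <= m i)%N])
     f [ffun i => (a i : nat)] * g [ffun i => (m i - a i)%N].

Definition ps_deriv (j : mexp n) (f : PS K n) : PS K n := fun m =>
  (\prod_(i < n) ((m i + j i) ^_ (j i)))%N%:R * f [ffun i => (m i + j i)%N].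

Definition in_xpow (c : nat) (f : PS K n) : Prop :=
  forall e : mexp n, (mdeg e < c)%N -> f e = 0.
End PSops.

(* A polynomial with coefficients in K[[x]] in the unknowns
   d^{|j|} z_i / dx^j  (i < q, j in N^n; j = 0 gives z_i itself):
   a finite list of terms  c * prod_{(i,j) in list} d^j z_i. *)
Definition dpoly (K : fieldType) (n q : nat) := seq (PS K n * seq ('I_q * mexp n)).

Definition deval (K : fieldType) (n q : nat) (z : 'I_q -> PS K n)
    (P : dpoly K n q) : PS K n :=
  \big[@ps_add K n/@ps0 K n]_(t <- P)
     ps_mul t.1 (\big[@ps_mul K n/@ps1 K n]_(u <- t.2) ps_deriv u.2 (z u.1)).

(* Main.v *)
Require Import Defs.
From mathcomp Require Import all_boot all_algebra.
From Stdlib Require Import FunctionalExtensionality.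
Local Open Scope ring_scope.
Import GRing.Theory.
Set Implicit Arguments. Unset Strict Implicit.

Section Poly.
Variable K : fieldType.

Definition is_poly (f : (nat -> K) -> K) := {p : cpoly K | forall v, f v = ceval v p}.

Fixpoint cmul (p q : cpoly K) : cpoly K :=
  match p with
  | [::] => [::]
  | a :: p' => [seq (a.1 * b.1, a.2 ++ b.2) | b <- q] ++ cmul p' q
  end.

Lemma ceval_cat (v : nat -> K) (p q : cpoly K) : ceval v (p ++ q) = ceval v p + ceval v q.
Proof. by rewrite /ceval big_cat. Qed.

Lemma ceval_mul (v : nat -> K) (p q : cpoly K) : ceval v (cmul p q) = ceval v p * ceval v q.
Proof.
elim: p => [|a p IH] /=; first by rewrite /ceval !big_nil mul0r.
rewrite ceval_cat IH /ceval [in X in _ = X * _]big_cons mulrDl; congr (_ + _).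
rewrite /ceval big_map mulr_sumr; apply: eq_bigr => b _ /=.
by rewrite big_cat /= mulrACA.
Qed.

Lemma ip_ext f g : (forall v, f v = g v) -> is_poly f -> is_poly g.
Proof. move=> e [p hp]; exists p => v; by rewrite -e. Qed.

Lemma ip_const c : is_poly (fun _ => c).
Proof. exists [:: (c, [::])] => v; by rewrite /ceval big_seq1 /= big_nil mulr1. Qed.

Lemma ip_var i : is_poly (fun v => v i).
Proof. exists [:: (1, [:: i])] => v; by rewrite /ceval big_seq1 /= big_seq1 mul1r. Qed.

Lemma ip_add f g : is_poly f -> is_poly g -> is_poly (fun v => f v + g v).
Proof. move=> [p hp] [q hq]; exists (p ++ q) => v; by rewrite ceval_cat hp hq. Qed.

Lemma ip_mul f g : is_poly f -> is_poly g -> is_poly (fun v => f v * g v).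
Proof. move=> [p hp] [q hq]; exists (cmul p q) => v; by rewrite ceval_mul hp hq. Qed.

Lemma ip_sum (I : Type) (r : seq I) (P : pred I) (F : I -> (nat -> K) -> K) :
  (forall i, is_poly (F i)) -> is_poly (fun v => \sum_(i <- r | P i) F i v).
Proof.
move=> h; elim: r => [|a r IH].
  by apply: (ip_ext _ (ip_const 0)) => v; rewrite big_nil.
case Pa: (P a).
  by apply: (ip_ext _ (ip_add (h a) IH)) => v; rewrite big_cons Pa.
by apply: (ip_ext _ IH) => v; rewrite big_cons Pa.
Qed.

Variables (n q : nat).

Definition PSP (g : (nat -> K) -> PS K n) := forall e, is_poly (fun v => g v e).

Lemma psp_add f g : PSP f -> PSP g -> PSP (fun v => ps_add (f v) (g v)).
Proof. move=> hf hg e; exact: ip_add. Qed.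

Lemma psp_mul f g : PSP f -> PSP g -> PSP (fun v => ps_mul (f v) (g v)).
Proof. move=> hf hg e; rewrite /ps_mul; apply: ip_sum => a; exact: ip_mul. Qed.

Lemma psp_deriv j f : PSP f -> PSP (fun v => ps_deriv j (f v)).
Proof. move=> hf e; rewrite /ps_deriv; apply: ip_mul; [exact: ip_const | exact: hf]. Qed.

Lemma psp_const c : PSP (fun _ => c).
Proof. move=> e; exact: ip_const. Qed.

Lemma psp_big (I : Type) (r : seq I) (op : PS K n -> PS K n -> PS K n) idx
  (F : I -> (nat -> K) -> PS K n) :
  (forall f g, PSP f -> PSP g -> PSP (fun v => op (f v) (g v))) ->
  (forall i, PSP (F i)) -> PSP (fun v => \big[op/idx]_(i <- r) F i v).
Proof.
move=> hop h; elim: r => [|a r IH].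
  move=> e; apply: (ip_ext _ (psp_const idx e)) => v; by rewrite big_nil.
move=> e; apply: (ip_ext _ (hop _ _ (h a) IH e)) => v; by rewrite big_cons.
Qed.

Definition zof (v : nat -> K) : 'I_q -> PS K n := fun i e => v (pickle (i, e)).

Lemma psp_deval (P : dpoly K n q) : PSP (fun v => deval (zof v) P).
Proof.
rewrite /deval; apply: psp_big; first exact: psp_add.
move=> t; apply: psp_mul; first exact: psp_const.
apply: psp_big; first exact: psp_mul.
move=> u; apply: psp_deriv => e; exact: ip_var.
Qed.
End Poly.

Theorem corollary4p1 (K : fieldType) (hK : aleph0_complete K) (n q m : nat)
    (F : 'I_m -> dpoly K n q) :
  (forall c : nat, exists z : 'I_q -> PS K n,
      forall k : 'I_m, in_xpow c (deval z (F k))) ->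
  exists z : 'I_q -> PS K n, forall (k : 'I_m) (e : mexp n), deval z (F k) e = 0.
Proof.
move=> happ.
pose S (j : nat) : cpoly K :=
  match @unpickle ('I_m * mexp n)%type j with
  | Some ke => sval (psp_deval (F ke.1) ke.2)
  | None => [::]
  end.
have HS : forall v (k : 'I_m) (e : mexp n), ceval v (S (pickle (k, e))) = deval (@zof K n q v) (F k) e.
  move=> v k e; rewrite /S pickleK /=.
  by case: (psp_deval (F k) e) => p hp /=; rewrite hp.
have [_ H] := hK S.
case: H => [s|v hv].
  pose bnd (j : nat) := match @unpickle ('I_m * mexp n)%type j with
                        | Some ke => mdeg ke.2 | None => 0%N end.
  have [z hz] := happ (\max_(j <- s) bnd j).+1.
  exists (fun j => match @unpickle ('I_q * mexp n)%type j with
                   | Some ie => z ie.1 ie.2 | None => 0 end) => j js.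
  rewrite /S; case E: (unpickle j) => [[k e]|]; last by rewrite /ceval big_nil.
  have Hz : @zof K n q (fun j => match @unpickle ('I_q * mexp n)%type j with
                   | Some ie => z ie.1 ie.2 | None => 0 end) = z.
    apply: functional_extensionality => i; apply: functional_extensionality => e'.
    by rewrite /zof pickleK.
  case: (psp_deval (F (k, e).1) (k, e).2) => p hp /=; rewrite -hp Hz.
  apply: (hz k e); rewrite ltnS.
  have -> : mdeg e = bnd j by rewrite /bnd E.
  exact: leq_bigmax_seq.
exists (@zof K n q v) => k e; rewrite -HS; exact: hv.
Qed.
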